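(* Let $d > 3$ be odd. In the coefficient-choosing game of degree $d$ over $\mathbb{Z}/16\mathbb{Z}$, whichever player makes the last move has a winning strategy.
   Context: The coefficient-choosing game of degree $d$ over $R = \mathbb{Z}/16\mathbb{Z}$: Nora and Wanda alternately choose coefficients of $f(x) = a_d x^d + \cdots + a_0$; on each move the current player picks a not-yet-chosen coefficient and assigns it a value in $R$, subject to $a_d \neq 0$, $a_0 \neq 0$. After all $d+1$ coefficients are chosen, Wanda wins if $f$ has a root in $R$, and Nora wins otherwise. Who moves first is fixed in advance, which determines who makes the last move. *)

(* Defs.v *)
From mathcomp Require Import all_boot all_order all_algebra.
Set Implicit Arguments. Unset Strict Implicit. Unset Printing Implicit Defensive.
Import GRing.Theory.
Local Open Scope ring_scope.

Definition R16 := 'Z_16.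

Inductive player := Nora | Wanda.
Definition other (p : player) : player :=
  match p with Nora => Wanda | Wanda => Nora end.
Definition player_eqb (p q : player) : bool :=
  match p, q with Nora, Nora | Wanda, Wanda => true | _, _ => false end.

(* A position: coefficient a_i (i = 0..d) is either chosen (Some v) or not (None). *)
Definition position (d : nat) := {ffun 'I_d.+1 -> option R16}.

Definition empty_position (d : nat) : position d := [ffun _ => None].

Definition legal_move d (s : position d) (i : 'I_d.+1) (v : R16) : bool :=
  (s i == None) && (((i : nat) == 0%N) || ((i : nat) == d) ==> (v != 0)).

Definition play_move d (s : position d) (i : 'I_d.+1) (v : R16) : position d :=
  [ffun j => if j == i then Some v else s j].

Definition poly_of d (s : position d) : {poly R16} :=
  \poly_(i < d.+1) odflt 0 (s (inord i)).

Definition has_root_in_R (p : {poly R16}) : bool := [exists x : R16, root p x].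

Definition outcome d (P : player) (s : position d) : bool :=
  if player_eqb P Wanda then has_root_in_R (poly_of s)
  else ~~ has_root_in_R (poly_of s).

(* wins d P n mover s : player P has a winning strategy from position s
   with n moves remaining, when it is [mover]'s turn. *)
Fixpoint wins d (P : player) (n : nat) (mover : player) (s : position d) : bool :=
  match n with
  | 0%N => outcome P s
  | n'.+1 =>
    if player_eqb mover P then
      [exists i : 'I_d.+1, exists v : R16,
         legal_move s i v && wins P n' (other mover) (play_move s i v)]
    else
      [forall i : 'I_d.+1, forall v : R16,
         legal_move s i v ==> wins P n' (other mover) (play_move s i v)]
  end.

Definition has_winning_strategy d (P first : player) : bool :=
  wins P d.+1 first (empty_position d).

Definition last_mover (d : nat) (first : player) : player :=
  if odd d.+1 then first else other first.

(* Main.v *)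
Require Import Defs.
From mathcomp Require Import all_boot all_order all_algebra.
From mathcomp Require Import zify.
Set Implicit Arguments. Unset Strict Implicit. Unset Printing Implicit Defensive.
Import GRing.Theory.
Local Open Scope ring_scope.

Definition par (a : R16) : bool := odd (nat_of_ord (a : 'Z_16)).

Lemma valD (a b : R16) : nat_of_ord (a + b : 'Z_16) = ((nat_of_ord (a : 'Z_16) + nat_of_ord (b : 'Z_16)) %% 16)%N.
Proof. by []. Qed.
Lemma valM (a b : R16) : nat_of_ord (a * b : 'Z_16) = ((nat_of_ord (a : 'Z_16) * nat_of_ord (b : 'Z_16)) %% 16)%N.
Proof. by []. Qed.

Lemma par_add a b : par (a + b) = par a (+) par b.
Proof. by rewrite /par valD odd_mod // oddD. Qed.
Lemma par_mul a b : par (a * b) = par a && par b.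
Proof. by rewrite /par valM odd_mod // oddM. Qed.
Lemma par0 : par 0 = false. Proof. by []. Qed.
Lemma par1 : par 1 = true. Proof. by []. Qed.
Lemma par2 : par 2 = false. Proof. by []. Qed.
Lemma par_exp x i : par (x ^+ i) = (i == 0)%N || par x.
Proof.
elim: i => [|i IH]; first by rewrite expr0 par1.
rewrite exprS par_mul IH; by case: (par x); case: i {IH}.
Qed.

Lemma Z16_inj (a b : R16) : nat_of_ord (a : 'Z_16) = nat_of_ord (b : 'Z_16) -> a = b.
Proof. by move=> h; apply: val_inj. Qed.

Lemma eight_mul (a : R16) : 8 * a = 0 \/ 8 * a = 8.
Proof.
have : ((8 * nat_of_ord (a : 'Z_16)) %% 16 == 0)%N || ((8 * nat_of_ord (a : 'Z_16)) %% 16 == 8)%N.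
  case: a => a Ha /=; move: Ha; by do 16?(case: a => [|a] //).
case/orP => /eqP h; [left|right]; apply: Z16_inj; by rewrite valM h.
Qed.

Lemma even_pow (x : R16) : ~~ par x ->
  (x ^+ 2 = 0 /\ x ^+ 3 = 0 /\ x ^+ 4 = 0) \/ (x ^+ 2 = 4 /\ x ^+ 3 = 8 /\ x ^+ 4 = 0).
Proof.
rewrite /par; case: x => x Hx /=; move: Hx.
do 16?(case: x => [|x]; first (move=> Hx /=; by [] || (move=> _; (by left; split; [|split]; apply/eqP) || (by right; split; [|split]; apply/eqP)))).
by [].
Qed.


Section G.
Variable d : nat.
Implicit Types (s : position d).

Definition cnt s := #|[pred i | s i == None]|.
Definition csum s : R16 := \sum_(i < d.+1) odflt 0 (s i).

Lemma play_ne s j v i : i != j -> play_move s j v i = s i.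
Proof. by move=> h; rewrite ffunE (negbTE h). Qed.
Lemma play_eq s j v : play_move s j v j = Some v.
Proof. by rewrite ffunE eqxx. Qed.
Lemma play_keep s j v k a : s j = None -> s k = Some a -> play_move s j v k = Some a.
Proof.
move=> hj hk; rewrite play_ne //; apply/eqP => e; by rewrite e hj in hk.
Qed.

Lemma cnt_play s j v : s j = None -> cnt s = (cnt (play_move s j v)).+1.
Proof.
move=> hj; rewrite /cnt (cardD1 j) inE hj eqxx /=; congr S.
apply: eq_card => i; rewrite !inE ffunE.
by case: (i =P j) => [->|] /=.
Qed.

Lemma cnt_pos s : (0 < cnt s)%N -> exists j : 'I_d.+1, s j = None.
Proof. by case/card_gt0P => j; rewrite inE => /eqP; exists j. Qed.

Lemma cnt_empty : cnt (empty_position d) = d.+1.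
Proof.
rewrite /cnt -[RHS](card_ord d.+1); apply: eq_card => i; by rewrite !inE ffunE.
Qed.

Lemma csum_play s j v : s j = None -> csum (play_move s j v) = v + csum s.
Proof.
move=> hj; rewrite /csum (bigD1 j) //= [in RHS](bigD1 j) //= play_eq hj /= add0r.
congr (_ + _); apply: eq_bigr => i hi; by rewrite play_ne.
Qed.

Lemma horner_of s x : (poly_of s).[x] = \sum_(i < d.+1) odflt 0 (s i) * x ^+ i.
Proof. rewrite /poly_of horner_poly; apply: eq_bigr => i _; by rewrite inord_val. Qed.

Lemma horner1 s : (poly_of s).[1] = csum s.
Proof. rewrite horner_of; apply: eq_bigr => i _; by rewrite expr1n mulr1. Qed.

Lemma par_sum (I : finType) (F : I -> R16) :
  par (\sum_i F i) = \big[addb/false]_i par (F i).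
Proof. exact: (big_morph par par_add par0). Qed.

Lemma par_eval_odd s x : par x -> par ((poly_of s).[x]) = par (csum s).
Proof.
move=> px; rewrite horner_of /csum !par_sum; apply: eq_bigr => i _.
by rewrite par_mul par_exp px orbT andbT.
Qed.

Lemma par_eval_even s x : ~~ par x -> par ((poly_of s).[x]) = par (odflt 0 (s ord0)).
Proof.
move=> px; rewrite horner_of par_sum big_ord_recl /= par_mul expr0 par1 andbT.
rewrite big1 ?addbF // => i _; by rewrite par_mul par_exp (negbTE px) andbF.
Qed.
End G.


Lemma peqb_refl P : player_eqb P P = true. Proof. by case: P. Qed.
Lemma peqb_other P : player_eqb (other P) P = false. Proof. by case: P. Qed.
Lemma other_other P : other (other P) = P. Proof. by case: P. Qed.

Lemma inv_wins d P (I : player -> nat -> position d -> Prop) :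
  (forall m s, I m 0%N s -> outcome P s) ->
  (forall n s, I P n.+1 s -> exists i v, legal_move s i v /\ I (other P) n (play_move s i v)) ->
  (forall n s i v, I (other P) n.+1 s -> legal_move s i v -> I P n (play_move s i v)) ->
  forall n m s, I m n s -> wins P n m s.
Proof.
move=> H0 HP HO n; elim: n => [|n IH] m s Hs; first exact: H0 _ _ Hs.
rewrite [wins _ _ _ _]/=.
have : m = P \/ m = other P by clear Hs IH H0 HP HO; case: m; case: P; auto.
case=> ?; subst m.
- rewrite peqb_refl.
  have [i [v [hl hi]]] := HP _ _ Hs.
  apply/existsP; exists i; apply/existsP; exists v; rewrite hl /=; exact: IH.
- rewrite peqb_other.
  apply/forallP => i; apply/forallP => v; apply/implyP => hl.
  rewrite other_other.
  exact: IH (HO _ _ _ _ Hs hl).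
Qed.

Section Wanda.
Variable d : nat.
Hypothesis hd : (4 <= d)%N.
Implicit Types (s : position d).

Definition ends s : nat := ((s ord0 == None) + (s ord_max == None))%N.

Lemma ord0_max : (ord0 : 'I_d.+1) != ord_max.
Proof. apply/eqP => /(congr1 val) /= h; move: hd; by rewrite -h. Qed.

Lemma ends_play s j v : s j = None ->
  (ends (play_move s j v) + ((j == ord0) || (j == ord_max)) = ends s)%N.
Proof.
move=> hj; rewrite /ends !ffunE.
case: (j =P ord0) => [e0|h0].
  by subst j; rewrite eqxx hj /= [ord_max == _]eq_sym (negbTE ord0_max) add0n addnC.
case: (j =P ord_max) => [e1|h1].
  by subst j; rewrite eqxx hj (negbTE ord0_max) /= addn0.
have -> : (ord0 == j) = false by apply/eqP => e; apply: h0.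
have -> : (ord_max == j) = false by apply/eqP => e; apply: h1.
by rewrite addn0.
Qed.

Definition J (m : player) (n : nat) s : Prop :=
  match m with
  | Nora => cnt s = n /\ ~~ odd n /\
            (if n == 0%N then has_root_in_R (poly_of s) else (2 * ends s + 2 <= n)%N)
  | Wanda => cnt s = n /\ odd n /\ (2 * ends s + 1 <= n)%N
  end.

Lemma J_term m s : J m 0 s -> outcome Wanda s.
Proof. by case: m => [[_ [_ h]]|[_ [h _]]]. Qed.

Lemma J_nora n s i v : J Nora n.+1 s -> legal_move s i v -> J Wanda n (play_move s i v).
Proof.
move=> [hc [ho he]] /andP [/eqP hi _].
have := ends_play v hi; rewrite (cnt_play v hi) in hc; case: hc => hc.
move=> hE; split=> //; split; first by move: ho; rewrite /= negbK.
rewrite /= in he; lia.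
Qed.

Lemma J_wanda n s : J Wanda n.+1 s ->
  exists i v, legal_move s i v /\ J Nora n (play_move s i v).
Proof.
move=> [hc [ho he]].
case: n hc ho he => [|n] hc ho he.
-
  have e0 : ends s = 0%N by lia.
  have h0 : s ord0 != None by move: e0; rewrite /ends; case: (s ord0 == None).
  have h1 : s ord_max != None by move: e0; rewrite /ends; case: (s ord_max == None); rewrite ?addn1.
  have [j hj] : exists j : 'I_d.+1, s j = None by apply: cnt_pos; rewrite hc.
  have j0 : ((j : nat) == 0%N) = false.
    apply/negbTE/eqP => e; move/eqP: h0; apply; rewrite (_ : ord0 = j) ?hj //; exact: val_inj.
  have jd : ((j : nat) == d) = false.
    apply/negbTE/eqP => e; move/eqP: h1; apply; rewrite (_ : ord_max = j) ?hj //; exact: val_inj.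
  exists j, (- \sum_(i < d.+1 | i != j) odflt 0 (s i)); split.
    rewrite /legal_move; apply/andP; split; first by apply/eqP.
    by rewrite j0 jd.
  split; first by have := cnt_play (- \sum_(i < d.+1 | i != j) odflt 0 (s i)) hj; rewrite hc => -[].
  split=> //=; apply/existsP; exists 1; rewrite /root horner1 csum_play //.
  have -> : csum s = \sum_(i < d.+1 | i != j) odflt 0 (s i) by rewrite /csum (bigD1 j) //= hj add0r.
  by rewrite addNr.
- have hn : (1 <= n)%N by move: ho; case: n {hc he}.
  have Hmove : forall j, s j = None -> ((j == ord0) || (j == ord_max) \/ ends s = 0%N) ->
      exists i v, legal_move s i v /\ J Nora n.+1 (play_move s i v).
    move=> j hj hje; exists j, 1; split; first by rewrite /legal_move hj eqxx oner_eq0 implybT.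
    have := ends_play 1 hj; have := cnt_play 1 hj; rewrite hc => -[hc'] hE.
    split=> //; split; first by move: ho; rewrite /= negbK.
    rewrite /=; case: hje => [hh|hh]; rewrite ?hh in hE; lia.
  case E0: (s ord0) => [a|]; last by apply: (Hmove ord0) => //; rewrite eqxx; left.
  case E1: (s ord_max) => [b|]; last by apply: (Hmove ord_max) => //; rewrite eqxx orbT; left.
  have [j hj] : exists j : 'I_d.+1, s j = None by apply: cnt_pos; rewrite hc.
  apply: (Hmove j) => //; right; by rewrite /ends E0 E1.
Qed.
End Wanda.


Lemma v3_ok (a0 a2 : R16) : a0 + 4 * a2 + 8 * (if a0 + 4 * a2 != 0 then 0 else 1) != 0.
Proof.
case: ifP => [h|/negbFE/eqP ->]; first by rewrite mulr0 addr0.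
by rewrite add0r mulr1.
Qed.

Lemma v2_ok (a0 a3 : R16) : a0 != 0 -> a0 + 4 * (if a0 != 8 then 0 else 1) + 8 * a3 != 0.
Proof.
move=> nz; case: ifP => [h|/negbFE/eqP ->]; case: (eight_mul a3) => ->.
- by rewrite mulr0 !addr0.
- rewrite mulr0 addr0; apply: contra h => /eqP h.
  have -> : a0 = - 8 by rewrite -(addrK 8 a0) h sub0r.
  by [].
- by [].
- by [].
Qed.

Section Nora.
Variable d : nat.
Hypothesis hd : (4 <= d)%N.
Implicit Types (s : position d).

Definition i1 : 'I_d.+1 := inord 1.
Definition i2 : 'I_d.+1 := inord 2.
Definition i3 : 'I_d.+1 := inord 3.

Lemma val_i1 : (i1 : nat) = 1%N. Proof. rewrite inordK //; lia. Qed.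
Lemma val_i2 : (i2 : nat) = 2%N. Proof. rewrite inordK //; lia. Qed.
Lemma val_i3 : (i3 : nat) = 3%N. Proof. rewrite inordK //; lia. Qed.

Lemma neq_val (a b : 'I_d.+1) : (a : nat) != b -> a != b.
Proof. by apply: contra => /eqP ->. Qed.

Lemma i10 : i1 != ord0. Proof. by apply: neq_val; rewrite val_i1. Qed.
Lemma i20 : i2 != ord0. Proof. by apply: neq_val; rewrite val_i2. Qed.
Lemma i30 : i3 != ord0. Proof. by apply: neq_val; rewrite val_i3. Qed.
Lemma i21 : i2 != i1. Proof. by apply: neq_val; rewrite val_i2 val_i1. Qed.
Lemma i31 : i3 != i1. Proof. by apply: neq_val; rewrite val_i3 val_i1. Qed.
Lemma i32 : i3 != i2. Proof. by apply: neq_val; rewrite val_i3 val_i2. Qed.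

Definition Rob s : bool :=
  match s ord0 with
  | Some a0 => par a0 || [&& a0 != 0, s i1 == Some 0 &
      match s i2 with
      | Some a2 => [forall a3 : R16, a0 + 4 * a2 + 8 * a3 != 0] ||
                   match s i3 with Some a3 => a0 + 4 * a2 + 8 * a3 != 0 | None => false end
      | None => false end]
  | None => false
  end.

Lemma Rob_play s j v : s j = None -> Rob s -> Rob (play_move s j v).
Proof.
move=> hj; rewrite /Rob; case E0: (s ord0) => [a0|] //; rewrite (play_keep v hj E0).
case/orP => [->//|/and3P [nz h1 h2]]; apply/orP; right.
rewrite nz (play_keep v hj (eqP h1)) eqxx /=.
move: h2; case E2: (s i2) => [a2|] //; rewrite (play_keep v hj E2).
case/orP => [->//|]; case E3: (s i3) => [a3|] //; rewrite (play_keep v hj E3) => ->.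
by rewrite orbT.
Qed.

Lemma eval4 s x : x ^+ 4 = 0 ->
  (poly_of s).[x] = odflt 0 (s ord0) + odflt 0 (s i1) * x + odflt 0 (s i2) * x ^+ 2
                    + odflt 0 (s i3) * x ^+ 3.
Proof.
move=> hx4; rewrite horner_of (bigD1 ord0) // (bigD1 i1) ?i10 //.
rewrite (bigD1 i2) ?i20 ?i21 // (bigD1 i3) ?i30 ?i31 ?i32 //.
rewrite big1 ?addr0; last first.
  move=> i /andP [/andP [/andP [/andP [_ h0] h1] h2] h3].
  have h4 : (4 <= i)%N.
    have : (i : nat) != 0%N by apply: contra h0 => /eqP e; apply/eqP/val_inj.
    have : (i : nat) != 1%N by apply: contra h1 => /eqP e; apply/eqP/val_inj; rewrite /= val_i1.
    have : (i : nat) != 2%N by apply: contra h2 => /eqP e; apply/eqP/val_inj; rewrite /= val_i2.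
    have : (i : nat) != 3%N by apply: contra h3 => /eqP e; apply/eqP/val_inj; rewrite /= val_i3.
    lia.
  by rewrite -(subnK h4) exprD hx4 mulr0 mulr0.
rewrite val_i1 val_i2 val_i3 /= expr0 mulr1 expr1 addr0.
by rewrite !addrA.
Qed.

Lemma Rob_noroot s : Rob s -> par (csum s) -> ~~ has_root_in_R (poly_of s).
Proof.
move=> hR hp; apply/existsP => -[x /eqP hx].
case px: (par x).
  by have := par_eval_odd s px; rewrite hx par0 hp.
have := par_eval_even s (negbT px); rewrite hx par0.
move: hR; rewrite /Rob; case E0: (s ord0) => [a0|] //=.
case/orP => [->//|/and3P [nz h1 h2]] _.
have key : a0 + 4 * odflt 0 (s i2) + 8 * odflt 0 (s i3) != 0.
  move: h2; case E2: (s i2) => [a2|] //=.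
  case/orP => [/forallP/(_ (odflt 0 (s i3)))//|].
  by case E3: (s i3) => [a3|] //=.
have ep := even_pow (negbT px).
have hx4 : x ^+ 4 = 0 by case: ep => [[_ [_ ->]]|[_ [_ ->]]].
move: hx; rewrite eval4 // E0 (eqP h1) /= mul0r addr0.
case: ep => [[-> [-> _]]|[-> [-> _]]].
  by rewrite !mulr0 !addr0 => e; rewrite e eqxx in nz.
rewrite [_ * 4]mulrC [_ * 8]mulrC => e; by rewrite e eqxx in key.
Qed.

Definition wf0 s : bool := s ord0 != Some 0.
Definition allfree s : bool := [&& s ord0 == None, s i1 == None, s i2 == None & s i3 == None].
Definition St0 s : bool := (s ord0 == None) || [&& s i1 == None, s i2 == None & s i3 == None].
Definition St1 s : bool := [&& s ord0 != None, s i1 == Some 0, s i2 == None & s i3 == None].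
Definition St1' s : bool := [&& s ord0 != None, s i1 == Some 0 & (s i2 == None) || (s i3 == None)].

Definition I (m : player) (n : nat) s : Prop :=
  match m with
  | Wanda => wf0 s /\ cnt s = n /\ ~~ odd n /\
     (if n == 0%N then is_true (~~ has_root_in_R (poly_of s))
      else Rob s \/ ((6 <= n)%N /\ allfree s) \/ ((4 <= n)%N /\ St1 s))
  | Nora => wf0 s /\ cnt s = n /\ odd n /\
     (Rob s \/ ((5 <= n)%N /\ St0 s) \/ ((3 <= n)%N /\ St1' s))
  end.

Lemma I_term m s : I m 0 s -> outcome Nora s.
Proof. by case: m => [[_ [_ [h _]]]|[_ [_ [_ h]]]]. Qed.

Lemma wf0_play s j v : legal_move s j v -> wf0 s -> wf0 (play_move s j v).
Proof.
case/andP => [/eqP hj hv]; rewrite /wf0 ffunE.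
case: (ord0 =P j) => [e|] //; subst j; move: hv => /implyP hv _.
by apply: contra (hv isT) => /eqP [->].
Qed.

Lemma keepN s j v k : s k = None -> k != j -> play_move s j v k = None.
Proof. by move=> h hk; rewrite play_ne. Qed.

Lemma I_wanda n s j v : I Wanda n.+1 s -> legal_move s j v -> I Nora n (play_move s j v).
Proof.
move=> [hw [hc [ho hr]]] hl; have hl' := hl; case/andP: hl' => [/eqP hj _].
split; first exact: wf0_play.
split; first by move: hc; rewrite (cnt_play v hj) => -[].
split; first by move: ho; rewrite /= negbK.
case: hr => [hR|[[h6 hf]|[h4 h1]]].
- by left; apply: Rob_play.
- right; left; split; first lia.
  case/and4P: hf => [/eqP f0 /eqP f1 /eqP f2 /eqP f3].
  case: (j =P ord0) => [e|ne]; last by rewrite /St0 keepN //; apply/eqP => e; apply: ne.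
  subst j; apply/orP; right.
  by rewrite !keepN ?i10 ?i20 ?i30 ?eqxx.
- right; right; split; first lia.
  case/and4P: h1 => [f0 /eqP f1 /eqP f2 /eqP f3].
  case E0: (s ord0) f0 => [a0|] // _.
  rewrite /St1' (play_keep v hj E0) (play_keep v hj f1) eqxx /=.
  case: (j =P i2) => [e|ne].
    by subst j; rewrite (@keepN s i2 v i3 f3 i32) eqxx orbT.
  rewrite (@keepN s j v i2 f2) //; apply/eqP => e; apply: ne; by rewrite e.
Qed.

Lemma legal_mid s j v : s j = None -> (j : nat) != 0%N -> (j : nat) != d -> legal_move s j v.
Proof. by move=> hj h0 hd'; rewrite /legal_move hj eqxx (negbTE h0) (negbTE hd'). Qed.

Lemma two_nz : (2 : R16) != 0. Proof. by []. Qed.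

Lemma I_nora n s : I Nora n.+1 s ->
  exists i v, legal_move s i v /\ I Wanda n (play_move s i v).
Proof.
move=> [hw [hc [ho hr]]].
have hevn : ~~ odd n by [].
case: hr => [hR|[[h5 h0]|[h3 h1]]].
- have [j hj] : exists j : 'I_d.+1, s j = None by apply: cnt_pos; rewrite hc.
  case: n hc ho hevn => [|n] hc ho hevn.
  + exists j, (if par (csum s) then 2 else 1); split.
      by rewrite /legal_move hj eqxx; case: (par (csum s)); rewrite ?two_nz ?oner_eq0 implybT.
    split; first by apply: wf0_play => //; rewrite /legal_move hj eqxx; case: (par (csum s)); rewrite ?two_nz ?oner_eq0 implybT.
    split; first by have := cnt_play (if par (csum s) then 2 else 1) hj; rewrite hc => -[].
    split=> //=; apply: Rob_noroot; first exact: Rob_play.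
    by rewrite csum_play // par_add; case: (par (csum s)); rewrite ?par1 ?par2.
  + exists j, 1; split; first by rewrite /legal_move hj eqxx oner_eq0 implybT.
    split; first by apply: wf0_play => //; rewrite /legal_move hj eqxx oner_eq0 implybT.
    split; first by have := cnt_play 1 hj; rewrite hc => -[].
    split=> //=; left; exact: Rob_play.
- case E0: (s ord0) h0 => [a0|] h0; last first.
  + have f0 := E0; exists ord0, 1; have hl : legal_move s ord0 1 by rewrite /legal_move f0 eqxx oner_eq0 implybT.
    split=> //; split; first exact: wf0_play.
    split; first by have := cnt_play 1 f0; rewrite hc => -[].
    split=> //; have -> : (n == 0%N) = false by apply/negbTE; lia.
    by left; rewrite /Rob play_eq par1.
  + move: h0; rewrite /St0 E0 /= => /and3P [/eqP f1 /eqP f2 /eqP f3].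
    have hl : legal_move s i1 0 by apply: legal_mid => //; rewrite val_i1 //; lia.
    exists i1, 0; split=> //; split; first exact: wf0_play.
    split; first by have := cnt_play 0 f1; rewrite hc => -[].
    split=> //; have -> : (n == 0%N) = false by apply/negbTE; lia.
    right; right; split; first lia.
    rewrite /St1 (play_keep 0 f1 E0) play_eq !keepN ?i21 ?i31 ?eqxx //.
- move: h1; rewrite /St1' => /and3P [f0 /eqP f1 f23].
  case E0: (s ord0) f0 => [a0|] // _.
  have nz : a0 != 0 by move: hw; rewrite /wf0 E0; apply: contra => /eqP ->.
  have hn0 : (n == 0%N) = false by apply/negbTE; lia.
  case E2: (s i2) f23 => [a2|] /= f3.
  + move/eqP: f3 => f3.
    pose v3 : R16 := (if a0 + 4 * a2 != 0 then 0 else 1).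
    have hl : legal_move s i3 v3 by apply: legal_mid => //; rewrite val_i3 //; lia.
    exists i3, v3; split=> //; split; first exact: wf0_play.
    split; first by have := cnt_play v3 f3; rewrite hc => -[].
    split=> //; rewrite hn0; left.
    rewrite /Rob (play_keep v3 f3 E0) nz (play_keep v3 f3 f1) (play_keep v3 f3 E2) play_eq eqxx /=.
    apply/orP; right; apply/orP; right; exact: v3_ok.
  + pose v2 : R16 := (if a0 != 8 then 0 else 1).
    have hl : legal_move s i2 v2 by apply: legal_mid => //; rewrite val_i2 //; lia.
    exists i2, v2; split=> //; split; first exact: wf0_play.
    split; first by have := cnt_play v2 E2; rewrite hc => -[].
    split=> //; rewrite hn0; left.
    rewrite /Rob (play_keep v2 E2 E0) nz (play_keep v2 E2 f1) play_eq eqxx /=.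
    apply/orP; right; apply/orP; left; apply/forallP => a3; exact: v2_ok.
Qed.

End Nora.


Unset Implicit Arguments.
Local Close Scope ring_scope.

Theorem lemma10 (d : nat) (hd : (3 < d)%N) (hodd : odd d) (first : player) :
  has_winning_strategy d (last_mover d first) first.
Proof.
have h5 : (5 <= d)%N by move: hd hodd; case: d => [|[|[|[|[|d]]]]].
rewrite /has_winning_strategy /last_mover.
have -> : odd d.+1 = false by rewrite /= hodd.
case: first.
- apply: (@inv_wins d Wanda (@J d)).
  + exact: J_term.
  + move=> n s; exact: J_wanda.
  + move=> n s i v; exact: J_nora.
  + split; first exact: cnt_empty.
    split; first by rewrite /= hodd.
    rewrite /= /ends !ffunE /=; lia.
- apply: (@inv_wins d Nora (@I d)).
  + exact: I_term.
  + move=> n s; exact: I_nora.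
  + move=> n s i v; exact: I_wanda.
  + split; first by rewrite /wf0 ffunE.
    split; first exact: cnt_empty.
    split; first by rewrite /= hodd.
    rewrite /=; right; left; split; first lia.
    by rewrite /allfree !ffunE.
Qed.
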